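(* Let $B>0$ and let $a_0,\dots,a_T\in[0,B]$ with $a_0>0$. Then $$\sum_{t=1}^{T}\frac{a_t}{\sum_{\tau=0}^{t-1}a_\tau}\le\log_2\!\left(\frac{\sum_{t=0}^{T-1}a_t}{a_0}\right)+1+\frac{2B}{a_0}.$$ *)

(* Defs.v *)
From Stdlib Require Import Reals.
Open Scope R_scope.

Fixpoint sumR (n : nat) (f : nat -> R) : R :=
  match n with
  | O => 0
  | S k => sumR k f + f k
  end.

Definition sumR_from (m n : nat) (f : nat -> R) : R :=
  sumR (n - m) (fun i => f (m + i)%nat).

Definition log2 (x : R) : R := ln x / ln 2.

(* Main.v *)
Require Import Defs.
From Stdlib Require Import Reals.
From Stdlib Require Import Lra Lia Psatz.
Open Scope R_scope.

Lemma ln2_bounds : 0 < ln 2 < 1.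
Proof.
  split.
  - pose proof ln_lt_2; lra.
  - rewrite <- (ln_exp 1). apply ln_increasing; [lra|].
    pose proof (exp_ineq1 1 ltac:(lra)); lra.
Qed.

Lemma ln_ratio_lb (s s' : R) : 0 < s -> 0 < s' -> 1 - s / s' <= ln s' - ln s.
Proof.
  intros hs hs'.
  pose proof (exp_ineq1_le (ln s - ln s')) as H.
  unfold Rminus in H. rewrite exp_plus, exp_Ropp, !exp_ln in H by lra.
  unfold Rdiv. lra.
Qed.

Lemma step (B a0 s y : R) : 0 < a0 -> a0 <= s -> 0 <= y <= B ->
  y / s <= log2 ((s + y) / a0) - log2 (s / a0) + 2 * B / s - 2 * B / (s + y).
Proof.
  intros ha0 hs hy.
  assert (hl : log2 ((s + y) / a0) - log2 (s / a0) = (ln (s+y) - ln s) / ln 2).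
  { unfold log2, Rdiv. rewrite !ln_mult, ln_Rinv by (try apply Rinv_0_lt_compat; lra).
    field. pose proof ln2_bounds; lra. }
  rewrite hl.
  pose proof ln2_bounds as [l0 l1].
  pose proof (ln_ratio_lb s (s+y) ltac:(lra) ltac:(lra)) as HL.
  set (L := ln (s + y) - ln s) in *.
  assert (L / ln 2 >= L).
  { assert (0 <= L). { assert (0 <= 1 - s/(s+y)).
      { assert (s / (s+y) <= 1). { apply Rmult_le_reg_r with (s+y); [lra|].
        unfold Rdiv; rewrite Rmult_assoc, Rinv_l by lra. lra. } lra. } lra. }
    apply Rle_ge. apply Rmult_le_reg_r with (ln 2); [lra|].
    unfold Rdiv; rewrite Rmult_assoc, Rinv_l by lra. nra. }
  assert (y / s <= 1 - s / (s+y) + 2 * B / s - 2 * B / (s + y)).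
  { assert (E : 1 - s / (s+y) + 2 * B / s - 2 * B / (s + y) - y / s
              = y * (2 * B - y) / (s * (s + y))) by (field; lra).
    assert (0 <= y * (2 * B - y) / (s * (s + y))).
    { unfold Rdiv; apply Rmult_le_pos; [nra|]. left; apply Rinv_0_lt_compat; nra. }
    lra. }
  lra.
Qed.

Theorem lemmaB1 (B : R) (T : nat) (a : nat -> R)
  (hB : 0 < B) (hT : (1 <= T)%nat)
  (ha : forall t, (t <= T)%nat -> 0 <= a t <= B)
  (ha0 : 0 < a 0%nat) :
  sumR_from 1 (T + 1) (fun t => a t / sumR t a)
  <= log2 (sumR T a / a 0%nat) + 1 + 2 * B / a 0%nat.
Proof.
  assert (Spos : forall n, (1 <= n)%nat -> (n <= T + 1)%nat -> a 0%nat <= sumR n a).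
  { induction n as [|n IH]; intros h1 h2; [lia|].
    destruct n as [|n]. { simpl. lra. }
    change (sumR (S (S n)) a) with (sumR (S n) a + a (S n)). pose proof (ha (S n) ltac:(lia)). specialize (IH ltac:(lia) ltac:(lia)).
    lra. }
  assert (claim : forall m, (m + 1 <= T)%nat ->
    sumR m (fun i => a (1 + i)%nat / sumR (1 + i) a)
    <= log2 (sumR (m + 1) a / a 0%nat) + 2 * B / a 0%nat - 2 * B / sumR (m + 1) a).
  { induction m as [|m IH]; intros hm.
    - simpl. replace ((0 + a 0%nat) / a 0%nat) with 1 by (field; lra).
      unfold log2; rewrite ln_1. replace (0 + a 0%nat) with (a 0%nat) by ring. lra.
    - specialize (IH ltac:(lia)).
      change (sumR (S m) (fun i => a (1 + i)%nat / sumR (1 + i) a)) with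
        (sumR m (fun i => a (1 + i)%nat / sumR (1 + i) a) + a (1 + m)%nat / sumR (1 + m) a).
      replace (S m + 1)%nat with (S (m + 1)) by lia.
      change (sumR (S (m + 1)) a) with (sumR (m + 1) a + a (m + 1)%nat).
      replace (1 + m)%nat with (m + 1)%nat by lia.
      pose proof (step B (a 0%nat) (sumR (m+1) a) (a (m+1)%nat) ha0
                   (Spos (m+1)%nat ltac:(lia) ltac:(lia)) (ha (m+1)%nat ltac:(lia))).
      lra. }
  unfold sumR_from. replace (T + 1 - 1)%nat with T by lia.
  destruct T as [|T]; [lia|].
  change (sumR (S T) (fun i => a (1 + i)%nat / sumR (1 + i) a)) with
    (sumR T (fun i => a (1 + i)%nat / sumR (1 + i) a) + a (1 + T)%nat / sumR (1 + T) a).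
  specialize (claim T ltac:(lia)).
  replace (T + 1)%nat with (S T) in claim by lia.
  replace (1 + T)%nat with (S T) by lia.
  pose proof (Spos (S T) ltac:(lia) ltac:(lia)).
  pose proof (ha (S T) ltac:(lia)).
  assert (a (S T) / sumR (S T) a - 2 * B / sumR (S T) a <= 0).
  { unfold Rdiv. rewrite <- Rmult_minus_distr_r.
    assert (0 < / sumR (S T) a) by (apply Rinv_0_lt_compat; lra). nra. }
  lra.
Qed.
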